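(* Let $\mathcal{BIP}$ be the class of bipartite graphs. Then: (i) if $j\in\{4,5,6\}$, then $R_1^{\mathcal{BIP}}(4,j)=2j-3$; (ii) if $j\in\{3,7\}$, then $R_1^{\mathcal{BIP}}(4,j)=2j-2$; (iii) if $j\in\{8,9,13,14\}$, then $R_1^{\mathcal{BIP}}(4,j)=2j-1$.
   Context: All graphs are finite and simple. For a graph $G$ and a nonnegative integer $k$, a $k$-sparse $j$-set is a set of $j$ vertices of $G$ inducing a subgraph of maximum degree at most $k$; a $k$-dense $i$-set is a set of $i$ vertices of $G$ that is $k$-sparse in the complement of $G$. For a graph class $\mathcal{G}$, $R_k^{\mathcal{G}}(i,j)$ is the smallest natural number $n$ such that every graph on $n$ vertices in $\mathcal{G}$ has either a $k$-dense $i$-set or a $k$-sparse $j$-set. *)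

(* Defs.v *)
From mathcomp Require Import all_boot.
Set Implicit Arguments. Unset Strict Implicit. Unset Printing Implicit Defensive.

Definition simple_graph (n : nat) (e : rel 'I_n) : Prop :=
  symmetric e /\ irreflexive e.

Definition compl_rel (n : nat) (e : rel 'I_n) : rel 'I_n :=
  fun x y => (x != y) && ~~ e x y.

Definition sparse_set (n : nat) (e : rel 'I_n) (k j : nat) (S : {set 'I_n}) : Prop :=
  #|S| = j /\ forall x, x \in S -> #|[set y in S | e x y]| <= k.

Definition dense_set (n : nat) (e : rel 'I_n) (k i : nat) (S : {set 'I_n}) : Prop :=
  sparse_set (compl_rel e) k i S.

Definition graph_class := forall n : nat, rel 'I_n -> Prop.

Definition bipartite : graph_class :=
  fun n e => exists c : 'I_n -> bool, forall x y, e x y -> c x != c y.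

Definition ramsey_prop (cls : graph_class) (k i j n : nat) : Prop :=
  forall e : rel 'I_n, simple_graph e -> cls n e ->
    (exists S, dense_set e k i S) \/ (exists S, sparse_set e k j S).

Definition ramsey_num_is (cls : graph_class) (k i j r : nat) : Prop :=
  ramsey_prop cls k i j r /\ forall m, m < r -> ~ ramsey_prop cls k i j m.

(* Main.v *)
Require Import Defs.
From mathcomp Require Import all_boot zify.
Set Implicit Arguments. Unset Strict Implicit. Unset Printing Implicit Defensive.

Fixpoint subs (s : seq nat) : seq (seq nat) :=
  if s is x :: s' then let r := subs s' in map (cons x) r ++ r else [:: [::]].

Definition inter (s t : seq nat) := [seq x <- s | x \in t].

Definition cval (L : seq (seq nat)) (m : seq nat) : nat :=
  size m + count (fun r => ~~ has (fun x => x \in m) r) L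
  + count (fun i => has (fun r => inter r m == [:: i]) L) m.

Definition c4free (L : seq (seq nat)) :=
  all (fun s => all (fun t => (s == t) || (size (inter s t) < 2)) L) L &&
  all (fun s => (size s < 2) || (count_mem s L < 2)) L.

Fixpoint lhas (T : Type) (p : T -> bool) (s : seq T) : bool :=
  if s is x :: s' then (if p x then true else lhas p s') else false.

Definition goodL a j L := lhas (fun m => j <= cval L m) (subs (iota 0 a)).
Definition PL a j L := if c4free L then goodL a j L else true.

Fixpoint srch a j (n : nat) (pre : seq (seq nat)) (cs : seq (seq nat)) : bool :=
  if PL a j pre then true else (if n is n'.+1 then
    (fix go cs := if cs is x :: cs' then
        (if srch a j n' (rcons pre x) cs then go cs' else false) else true) cs
   else false).

Definition lowchk a b j L := all (fun m => cval L m < j) (subs (iota 0 a)) && c4free L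
  && (size L == b) && all (fun r => r \in subs (iota 0 a)) L.

Lemma lhasE T (p : T -> bool) s : lhas p s = has p s.
Proof. by elim: s => //= x s ->; case: (p x). Qed.

Lemma PLE a j L : PL a j L = ~~ c4free L || has (fun m => j <= cval L m) (subs (iota 0 a)).
Proof. by rewrite /PL /goodL lhasE; case: (c4free L). Qed.

Lemma subs_filter p s : filter p s \in subs s.
Proof.
elim: s => [|x s IH] //=; rewrite mem_cat; case: (p x) => /=.
  by rewrite mem_map ?IH // => u v [].
by rewrite IH orbT.
Qed.

Lemma subs_subseq m s : m \in subs s -> subseq m s.
Proof.
elim: s m => [|x s IH] m /=; first by rewrite inE => /eqP ->.
rewrite mem_cat => /orP [/mapP [t Ht ->]|Hm] /=; first by rewrite eqxx; exact: IH.
exact: subseq_trans (IH _ Hm) (subseq_cons s x).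
Qed.

Lemma subs_prop a m : m \in subs (iota 0 a) -> uniq m /\ (forall x, x \in m -> x < a).
Proof.
move/subs_subseq => H; split; first exact: subseq_uniq H (iota_uniq 0 a).
by move=> x /(mem_subseq H); rewrite mem_iota.
Qed.

Lemma c4free_catl L1 L2 : c4free (L1 ++ L2) -> c4free L1.
Proof.
case/andP => H1 H2; apply/andP; split.
  apply/allP => s Hs; apply/allP => t Ht.
  have := allP H1 s; rewrite mem_cat Hs => /(_ isT) /allP /(_ t); rewrite mem_cat Ht.
  by apply.
apply/allP => s Hs; have := allP H2 s; rewrite mem_cat Hs => /(_ isT).
case/orP => [->//|H]; apply/orP; right; apply: leq_ltn_trans H.
by rewrite count_cat leq_addr.
Qed.

Lemma cval_catl L1 L2 m : cval L1 m <= cval (L1 ++ L2) m.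
Proof.
rewrite /cval count_cat; apply: leq_add; first by rewrite leq_add2l leq_addr.
by apply: sub_count => i /= H; rewrite has_cat H.
Qed.

Lemma PL_catl a j L1 L2 : PL a j L1 -> PL a j (L1 ++ L2).
Proof.
rewrite !PLE => /orP [H|/hasP [m Hm Hj]].
  by apply/orP; left; apply: contra H; apply: c4free_catl.
by apply/orP; right; apply/hasP; exists m => //; apply: leq_trans Hj (cval_catl _ _ _).
Qed.

Lemma PL_perm a j L1 L2 : perm_eq L1 L2 -> PL a j L1 = PL a j L2.
Proof.
move=> HP; rewrite !PLE; congr (~~ _ || _).
  rewrite /c4free (perm_all _ HP) (perm_all (fun s => _ || _) HP).
  congr (_ && _); apply: eq_all => s; first by rewrite (perm_all _ HP).
  by have /permP -> := HP.
apply: eq_has => m; rewrite /cval.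
have /permP E := HP; rewrite E.
congr (_ <= _); congr (_ + _); apply: eq_count => i; exact: perm_has.
Qed.
Inductive chooses : seq (seq nat) -> seq (seq nat) -> Prop :=
| ch_nil cs : chooses cs [::]
| ch_here x cs L : chooses (x :: cs) L -> chooses (x :: cs) (x :: L)
| ch_skip x cs L : chooses cs L -> chooses (x :: cs) L.

Lemma srch_sound a j n : forall pre cs L,
  srch a j n pre cs -> chooses cs L -> size L = n -> PL a j (pre ++ L).
Proof.
elim: n => [|n IH] pre cs L /=.
  by case: ifP => HP // _ _ _; exact: PL_catl.
case: ifP => [HP _ _ _|_]; first exact: PL_catl.
move=> Hgo Hch; elim: Hch Hgo => [cs' | x cs' L' Hch' IHch | x cs' L' Hch' IHch] Hgo Hsz //.
  move: Hgo; case: ifP => // Hs _.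
  by rewrite -cat_rcons; apply: IH Hs Hch' _; case: Hsz.
by move: Hgo; case: ifP => // _ Hgo'; apply: IHch.
Qed.

Lemma sorted_chooses (U : seq (seq nat)) L :
  sorted (fun u v => index u U <= index v U) L -> all (fun x => x \in U) L -> chooses U L.
Proof.
elim: U L => [|u U IH] L.
  by case: L => [|x L] _ H; [exact: ch_nil | by []].
elim: L => [|x L IHL] Hs Ha; first exact: ch_nil.
case: (eqVneq x u) => [->|Hxu].
  apply: ch_here; apply: IHL; [exact: path_sorted Hs | by case/andP: Ha].
have Hall : all (fun y => y != u) (x :: L).
  rewrite /= Hxu /=; have := order_path_min _ Hs.
  move=> /(_ (fun y x z h1 h2 => leq_trans h1 h2)) /allP Hm.
  apply/allP => y Hy; have := Hm y Hy; rewrite /= eq_sym (negbTE Hxu).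
  by case: (eqVneq u y).
apply: ch_skip; apply: IH.
  have E : {in [pred y | y != u] &, (fun v w => index v (u :: U) <= index w (u :: U))
     =2 (fun v w => index v U <= index w U)}.
    by move=> y z Hy Hz /=; rewrite eq_sym (negbTE Hy) eq_sym (negbTE Hz).
  by rewrite -(eq_in_sorted E).
apply/allP => y Hy; have := allP Ha y Hy; rewrite inE.
by have := allP Hall y Hy => /negbTE ->.
Qed.

Lemma srch_all a j b (L : seq (seq nat)) :
  srch a j b [::] (subs (iota 0 a)) -> size L = b ->
  all (fun r => r \in subs (iota 0 a)) L -> PL a j L.
Proof.
move=> Hs Hsz Ha.
set R := fun u v => index u (subs (iota 0 a)) <= index v (subs (iota 0 a)).
have HP := perm_sort R L.
have HP2 : perm_eq (sort R L) L by rewrite HP perm_refl.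
rewrite -(PL_perm a j HP2).
have -> : sort R L = [::] ++ sort R L by [].
apply: srch_sound Hs _ _; last by rewrite size_sort.
apply: sorted_chooses; first by apply: sort_sorted => u v; apply: leq_total.
by rewrite all_sort.
Qed.
Definition toset a (r : seq nat) : {set 'I_a} := [set i : 'I_a | val i \in r].

Definition valL a (Ls : seq {set 'I_a}) (A' : {set 'I_a}) :=
  #|A'| + count (fun s => s :&: A' == set0) Ls
  + #|[set i in A' | has (fun s => s :&: A' == [set i]) Ls]|.

Lemma card_count (T : finType) (p : pred T) : #|[set x | p x]| = count p (enum T).
Proof.
rewrite cardsE cardE /enum_mem size_filter count_filter.
by apply: eq_count => x; rewrite /= andbT.
Qed.

Lemma count_iota a (p : pred nat) : count p (iota 0 a) = #|[set i : 'I_a | p i]|.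
Proof. by rewrite card_count -val_enum_ord count_map. Qed.

Lemma count_sub a (m : seq nat) (P : pred nat) : uniq m -> (forall x, x \in m -> x < a) ->
  count P m = #|[set i : 'I_a | (val i \in m) && P i]|.
Proof.
move=> Hu Ha; rewrite -(count_iota a (fun x => (x \in m) && P x)).
have Hp : perm_eq m (filter (fun x => x \in m) (iota 0 a)).
  apply: uniq_perm => //; first exact/filter_uniq/iota_uniq.
  move=> x; rewrite mem_filter mem_iota add0n /=.
  by case Hx: (x \in m) => //=; rewrite Ha.
rewrite (permP Hp) count_filter; apply: eq_count => x /=; exact: andbC.
Qed.

Lemma card_toset a m : uniq m -> (forall x, x \in m -> x < a) -> #|toset a m| = size m.
Proof.
move=> Hu Ha; rewrite -count_predT (count_sub (a:=a)) //.
by apply: eq_card => i; rewrite !inE andbT.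
Qed.

Lemma toset_inter a r m : toset a (inter r m) = toset a r :&: toset a m.
Proof. by apply/setP => i; rewrite !inE mem_filter andbC. Qed.

Lemma toset_nil a s : (forall x, x \in s -> x < a) -> (toset a s == set0) = (s == [::]).
Proof.
case: s => [|x s] Ha.
  by rewrite eqxx; apply/eqP/setP => i; rewrite !inE.
apply/negbTE/set0Pn; exists (Ordinal (Ha x (mem_head x s))).
by rewrite inE /= mem_head.
Qed.

Lemma toset_single a s (i : 'I_a) : uniq s -> (forall x, x \in s -> x < a) ->
  (toset a s == [set i]) = (s == [:: val i]).
Proof.
move=> Hu Ha; apply/eqP/eqP => [Heq|->]; last first.
  by apply/setP => k; rewrite !inE val_eqE.
have Hall : forall x, x \in s -> x = val i.
  move=> x Hx; have : Ordinal (Ha x Hx) \in toset a s by rewrite inE.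
  by rewrite Heq inE => /eqP <-.
have Hi : val i \in s.
  have : i \in toset a s by rewrite Heq set11.
  by rewrite inE.
case: s Hu Ha Heq Hall Hi => [|x [|z s]] //= Hu Ha Heq Hall Hi.
  by rewrite (Hall x (mem_head _ _)).
move: Hu; rewrite inE (Hall x (mem_head _ _)) (Hall z).
  by rewrite eqxx.
by rewrite !inE eqxx orbT.
Qed.

Lemma cval_valL a L m : uniq m -> (forall x, x \in m -> x < a) ->
  (forall r, r \in L -> uniq r /\ forall x, x \in r -> x < a) ->
  cval L m = valL (map (toset a) L) (toset a m).
Proof.
move=> Hu Ha HL; rewrite /cval /valL card_toset //; congr (_ + _ + _).
  rewrite count_map; apply: eq_in_count => r Hr /=.
  rewrite -toset_inter toset_nil; last first.
    by move=> x; rewrite mem_filter => /andP [_ Hx]; case: (HL r Hr) => _; apply.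
  by rewrite has_filter negbK.
rewrite (count_sub (a:=a)) //; apply: eq_card => i; rewrite !inE.
case Hi: (val i \in m) => //=.
rewrite has_map; apply: eq_in_has => r Hr /=.
rewrite -toset_inter toset_single //.
  by case: (HL r Hr) => Hr' _; apply: filter_uniq.
by move=> x; rewrite mem_filter => /andP [_ Hx]; case: (HL r Hr) => _; apply.
Qed.
Definition sparseab a b (rows : 'I_b -> {set 'I_a}) (A' : {set 'I_a}) (B' : {set 'I_b}) :=
  (forall k, k \in B' -> #|rows k :&: A'| <= 1) /\
  (forall i, i \in A' -> #|[set k in B' | i \in rows k]| <= 1).

Definition C4ab a b (rows : 'I_b -> {set 'I_a}) :=
  exists i1 i2 k1 k2, [/\ i1 != i2, k1 != k2, (i1 \in rows k1) && (i2 \in rows k1),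
                          i1 \in rows k2 & i2 \in rows k2].

Lemma le1_set1 (T : finType) (X : {set T}) i : #|X| <= 1 -> i \in X -> X = [set i].
Proof.
move=> /card_le1P H Hi; apply/setP => z; rewrite inE.
by have := H i Hi z; rewrite inE.
Qed.

Lemma le1_eq (T : finType) (X : {set T}) x y : #|X| <= 1 -> x \in X -> y \in X -> x = y.
Proof. by move=> /card_le1P H Hx Hy; have := H x Hx y; rewrite Hy inE => /esym/eqP. Qed.

Lemma le1_intro (T : finType) (X : {set T}) :
  (forall x y, x \in X -> y \in X -> x = y) -> #|X| <= 1.
Proof.
move=> H; case: (set_0Vmem X) => [->|[x Hx]]; first by rewrite cards0.
rewrite -(cards1 x); apply/subset_leq_card/subsetP => y Hy.
by rewrite inE (H y x Hy Hx).
Qed.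

Lemma valL_rows a b (rows : 'I_b -> {set 'I_a}) A' :
  valL (map rows (enum 'I_b)) A' = #|A'| + #|[set k | rows k :&: A' == set0]|
     + #|[set i in A' | [exists k, rows k :&: A' == [set i]]]|.
Proof.
rewrite /valL count_map (card_count (fun k => rows k :&: A' == set0)).
congr (_ + _ + _); apply: eq_card => i; rewrite !inE has_map; congr (_ && _).
apply/hasP/existsP => [[k _ H]|[k H]]; first by exists k.
by exists k; rewrite ?mem_enum.
Qed.

Lemma low_bound a b (rows : 'I_b -> {set 'I_a}) A' B' :
  sparseab rows A' B' -> #|A'| + #|B'| <= valL (map rows (enum 'I_b)) A'.
Proof.
case=> H1 H2; rewrite valL_rows -addnA leq_add2l.
set Z := [set k | rows k :&: A' == set0].
set H := [set i in A' | [exists k, rows k :&: A' == [set i]]].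
rewrite -(cardsID Z B'); apply: leq_add; first by apply/subset_leq_card/subsetIr.
pose g k := [pick i in rows k :&: A'].
have gk : forall k, k \in B' :\: Z -> exists i, g k = Some i /\ rows k :&: A' = [set i].
  move=> k; rewrite !inE => /andP [HZ HB].
  rewrite /g; case: pickP => [i Hi|Hn].
    by exists i; split => //; apply: le1_set1 => //; apply: H1.
  by case/set0Pn: HZ => i Hi; have := Hn i; rewrite Hi.
have inj : {in B' :\: Z &, injective g}.
  move=> k1 k2 Hk1 Hk2 E.
  have [i1 [g1 R1]] := gk k1 Hk1; have [i2 [g2 R2]] := gk k2 Hk2.
  move: E; rewrite g1 g2 => [[E]]; subst i2.
  have Hi1 : i1 \in rows k1 :&: A' by rewrite R1 set11.
  have Hi2 : i1 \in rows k2 :&: A' by rewrite R2 set11.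
  move: Hi1 Hi2; rewrite !inE => /andP [Hr1 HA] /andP [Hr2 _].
  move: Hk1 Hk2; rewrite !inE => /andP [_ Hb1] /andP [_ Hb2].
  apply: (le1_eq (H2 i1 HA)); by rewrite inE ?Hb1 ?Hb2 ?Hr1 ?Hr2.
rewrite -(card_in_imset inj) -(card_imset H (@Some_inj _)).
apply: subset_leq_card; apply/subsetP => z /imsetP [k Hk ->].
have [i [gi Ri]] := gk k Hk; rewrite gi; apply: imset_f.
have : i \in rows k :&: A' by rewrite Ri set11.
rewrite !inE => /andP [_ ->] /=; apply/existsP; exists k; by rewrite Ri.
Qed.

Lemma up_bound a b j (rows : 'I_b -> {set 'I_a}) A' :
  j <= valL (map rows (enum 'I_b)) A' ->
  exists B', sparseab rows A' B' /\ j <= #|A'| + #|B'|.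
Proof.
rewrite valL_rows.
set Z := [set k | rows k :&: A' == set0].
set H := [set i in A' | [exists k, rows k :&: A' == [set i]]].
pose h i := [pick k | rows k :&: A' == [set i]].
set B1 := [set k | [exists i in A', h i == Some k]].
have hB1 : forall k, k \in B1 -> exists i, [/\ i \in A', h i = Some k & rows k :&: A' = [set i]].
  move=> k; rewrite inE => /existsP [i /andP [Hi /eqP Hh]]; exists i; split => //.
  move: Hh; rewrite /h; case: pickP => // k' Hk [Ek]; rewrite -Ek; exact/eqP.
have hH : forall i, i \in H -> exists k, h i = Some k /\ k \in B1.
  move=> i; rewrite inE => /andP [HA /existsP [k0 Hk0]].
  case Eh: (h i) => [k|]; last first.
    by move: Eh; rewrite /h; case: pickP => // Hn; have := Hn k0; rewrite Hk0.
  by exists k; split => //; rewrite inE; apply/existsP; exists i; rewrite HA Eh eqxx.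
have hspec : forall i k, h i = Some k -> rows k :&: A' = [set i].
  by move=> i k; rewrite /h; case: pickP => // k' Hk [Ek]; rewrite -Ek; exact/eqP.
move=> Hj; exists (Z :|: B1); split.
  split.
    move=> k /setUP [HZ|HB].
      by rewrite inE in HZ; rewrite (eqP HZ) cards0.
    by have [i [_ _ ->]] := hB1 k HB; rewrite cards1.
  move=> i HA; apply: le1_intro => x y.
  have cl : forall k, k \in [set k in Z :|: B1 | i \in rows k] -> h i = Some k.
    move=> k; rewrite inE => /andP [HZB Hr]; case/setUP: HZB => [HZ|HB].
      have : i \in rows k :&: A' by rewrite inE Hr HA.
      by rewrite inE in HZ; rewrite (eqP HZ) inE.
    have [i' [HA' Hh' R']] := hB1 k HB.
    have : i \in rows k :&: A' by rewrite inE Hr HA.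
    by rewrite R' inE => /eqP ->.
  by move=> /cl Hx /cl; rewrite Hx => -[].
have ZB : Z :&: B1 = set0.
  apply/setP => k; rewrite inE [RHS]inE; apply/negbTE/negP => /andP [HZ HB].
  have [i [_ _ R]] := hB1 k HB; move: HZ; rewrite inE R => /eqP /setP /(_ i).
  by rewrite !inE eqxx.
have E1 : Some @: B1 = h @: H.
  apply/setP => z; apply/imsetP/imsetP => [[k Hk ->]|[i Hi ->]].
    have [i [HA Hh R]] := hB1 k Hk; exists i; last by rewrite Hh.
    by rewrite inE HA /=; apply/existsP; exists k; rewrite R.
  by have [k [Hh Hk]] := hH i Hi; exists k; rewrite ?Hh.
have injh : {in H &, injective h}.
  move=> i1 i2 H1 H2 E; have [k [h1 _]] := hH i1 H1.
  have R1 := hspec _ _ h1; rewrite E in h1; have R2 := hspec _ _ h1.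
  by apply/set1_inj; rewrite -R1 -R2.
rewrite cardsU ZB cards0 subn0 -(card_imset B1 (@Some_inj _)) E1 (card_in_imset injh).
by rewrite addnA.
Qed.
Definition ofset a (X : {set 'I_a}) := [seq x <- iota 0 a | [exists i in X, val i == x]].

Lemma ofsetK a (X : {set 'I_a}) : toset a (ofset X) = X.
Proof.
apply/setP => i; rewrite inE mem_filter mem_iota /= ltn_ord andbT.
apply/existsP/idP => [[i' /andP [H /eqP E]]|H]; first by rewrite -(val_inj E).
by exists i; rewrite H eqxx.
Qed.

Lemma ofset_subs a (X : {set 'I_a}) : ofset X \in subs (iota 0 a).
Proof. exact: subs_filter. Qed.

Lemma two_mem (s : seq nat) x y : x \in s -> y \in s -> x != y -> 1 < size s.
Proof.
case: s => [|z [|w s]] //=; rewrite !inE => /eqP -> /eqP ->.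
by rewrite eqxx.
Qed.

Lemma subsL a (L : seq (seq nat)) : all (fun r => r \in subs (iota 0 a)) L ->
  forall r, r \in L -> uniq r /\ forall x, x \in r -> x < a.
Proof. by move=> /allP H r /H /subs_prop. Qed.

Lemma mat_upper a b j (rows : 'I_b -> {set 'I_a}) :
  srch a j b [::] (subs (iota 0 a)) ->
  C4ab rows \/ exists A' B', sparseab rows A' B' /\ j <= #|A'| + #|B'|.
Proof.
move=> Hs.
pose rl k := ofset (rows k).
have rlT : forall k, toset a (rl k) = rows k by move=> k; exact: ofsetK.
set L := map rl (enum 'I_b).
have HU : all (fun r => r \in subs (iota 0 a)) L.
  by apply/allP => r /mapP [k _ ->]; apply: ofset_subs.
have HPL : PL a j L by apply: (srch_all Hs) => //; rewrite size_map size_enum_ord.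
rewrite PLE in HPL; case/orP: HPL => [Hc|/hasP [m Hm Hj]]; last first.
  right; exists (toset a m).
  case: (subs_prop Hm) => Hmu Hma.
  rewrite (cval_valL Hmu Hma (subsL HU)) /L -map_comp (eq_map rlT) in Hj.
  exact: up_bound Hj.
left.
have get : forall (i : 'I_a) k, val i \in rl k -> i \in rows k.
  by move=> i k H; rewrite -rlT inE.
have lt : forall x k, x \in rl k -> x < a.
  by move=> x k; rewrite mem_filter mem_iota => /andP [_ /andP [_ ->]].
have [k1 [k2 [Hk Hsz]]] : exists k1 k2, k1 != k2 /\ 1 < size (inter (rl k1) (rl k2)).
  move: Hc; rewrite /c4free negb_and => /orP [/allPn [s Hs1 /allPn [t Ht]]|].
    rewrite negb_or -leqNgt => /andP [Hst Hsz].
    case/mapP: Hs1 => k1 _ E1; case/mapP: Ht => k2 _ E2; subst s t.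
    exists k1, k2; split => //; apply: contra Hst => /eqP -> //.
  move=> /allPn [s Hs1]; rewrite negb_or -!leqNgt => /andP [Hsz Hcnt].
  move: Hcnt; rewrite /L count_map -(card_count (fun k => rl k == s)) => /card_gt1P.
  move=> [k1 [k2 [H1 H2 Hk]]]; exists k1, k2; split => //.
  move: H1 H2; rewrite !inE => /eqP -> /eqP ->.
  by rewrite /inter (eq_in_filter (a2 := predT)) ?filter_predT // => x ->.
have Hu : uniq (inter (rl k1) (rl k2)).
  by apply/filter_uniq/filter_uniq/iota_uniq.
move: Hsz Hu; case E: (inter (rl k1) (rl k2)) => [|x [|y s]] //= _.
rewrite inE negb_or => /andP [/andP [Hxy _] _].
have Hx : x \in inter (rl k1) (rl k2) by rewrite E mem_head.
have Hy : y \in inter (rl k1) (rl k2) by rewrite E !inE eqxx orbT.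
move: Hx; rewrite /inter mem_filter => /andP [Hx2 Hx1].
move: Hy; rewrite /inter mem_filter => /andP [Hy2 Hy1].
exists (Ordinal (lt _ _ Hx1)), (Ordinal (lt _ _ Hy1)), k1, k2; split => //.
by rewrite !get.
by apply: get.
by apply: get.
Qed.

Lemma mat_lower a b j L : lowchk a b j L ->
  let rows := fun k : 'I_b => toset a (nth [::] L k) in
  ~ C4ab rows /\ forall A' B', sparseab rows A' B' -> #|A'| + #|B'| < j.
Proof.
case/andP => [/andP [/andP [Hall Hc] /eqP Hsz] HU] rows.
have EL : map rows (enum 'I_b) = map (toset a) L.
  by rewrite -[in RHS](mkseq_nth [::] L) /mkseq Hsz -val_enum_ord -!map_comp.
split; last first.
  move=> A' B' Hsp; apply: leq_ltn_trans (low_bound Hsp) _.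
  rewrite EL -[X in valL _ X](ofsetK A'); case: (subs_prop (ofset_subs A')) => Hmu Hma.
  rewrite -(cval_valL Hmu Hma (subsL HU)).
  exact: (allP Hall _ (ofset_subs A')).
move=> [i1 [i2 [k1 [k2 [Hi Hk /andP [H11 H21] H12 H22]]]]].
have Ek : forall k : 'I_b, nth [::] L k \in L.
  by move=> k; apply: mem_nth; rewrite Hsz.
move: H11 H21 H12 H22; rewrite !inE => H11 H21 H12 H22.
have Hv : val i1 != val i2 by [].
case/andP: Hc => Hc1 Hc2.
case: (eqVneq (nth [::] L k1) (nth [::] L k2)) => Es.
  have H1 : 1 < size (nth [::] L k1) by apply: two_mem H11 H21 Hv.
  have H2 : 1 < count_mem (nth [::] L k1) L.
    have EL2 : L = map (fun k : 'I_b => nth [::] L k) (enum 'I_b).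
      by rewrite -{1}(mkseq_nth [::] L) /mkseq Hsz -val_enum_ord -map_comp.
    rewrite {2}EL2 count_map -(card_count (fun k : 'I_b => nth [::] L k == nth [::] L k1)).
    apply/card_gt1P; exists k1, k2; by rewrite !inE Es eqxx.
  have := allP Hc2 _ (Ek k1); case/orP => H.
    by move: H; rewrite ltnNge H1.
  by move: H; rewrite ltnNge H2.
have := allP (allP Hc1 _ (Ek k1)) _ (Ek k2); rewrite (negbTE Es) /= ltnNge.
rewrite (two_mem (x := val i1) (y := val i2)) //; by rewrite mem_filter ?H11 ?H12 ?H21 ?H22.
Qed.
Lemma shrink n (e : rel 'I_n) k j (S : {set 'I_n}) : j <= #|S| ->
  (forall x, x \in S -> #|[set y in S | e x y]| <= k) -> exists S', sparse_set e k j S'.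
Proof.
move=> Hj Hs; exists [set x in take j (enum S)]; split.
  have /card_uniqP E : uniq (take j (enum S)) by apply/take_uniq/enum_uniq.
  by rewrite cardsE E size_takel // -cardE.
have sub : forall x, x \in [set x in take j (enum S)] -> x \in S.
  by move=> x; rewrite inE => /mem_take; rewrite mem_enum.
move=> x Hx; apply: leq_trans (Hs x (sub x Hx)); apply/subset_leq_card/subsetP => y.
by rewrite !inE => /andP [/mem_take Hy ->]; rewrite andbT -(mem_enum (mem S)).
Qed.

Lemma sparse_map n N (f : 'I_n -> 'I_N) (e' : rel 'I_n) (e : rel 'I_N) k j S :
  injective f -> (forall x y, e' x y = e (f x) (f y)) ->
  sparse_set e' k j S -> sparse_set e k j (f @: S).
Proof.
move=> inj He [Hc Hs]; split; first by rewrite card_imset.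
move=> z /imsetP [x Hx ->]; apply: leq_trans (Hs x Hx).
have : [set y in f @: S | e (f x) y] \subset f @: [set y in S | e' x y].
  apply/subsetP => w; rewrite inE => /andP [/imsetP [y Hy ->] H].
  by apply: imset_f; rewrite inE Hy He H.
by move/subset_leq_card; rewrite card_imset.
Qed.

Lemma dense_map n N (f : 'I_n -> 'I_N) (e' : rel 'I_n) (e : rel 'I_N) k j S :
  injective f -> (forall x y, e' x y = e (f x) (f y)) ->
  dense_set e' k j S -> dense_set e k j (f @: S).
Proof.
move=> inj He; apply: sparse_map => // x y.
by rewrite /compl_rel He (inj_eq inj).
Qed.

Lemma C4_dense n (e : rel 'I_n) (c : 'I_n -> bool) x1 x2 y1 y2 :
  symmetric e -> (forall x y, e x y -> c x != c y) ->
  c x1 -> c x2 -> ~~ c y1 -> ~~ c y2 -> x1 != x2 -> y1 != y2 ->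
  e x1 y1 -> e x1 y2 -> e x2 y1 -> e x2 y2 ->
  dense_set e 1 4 [set x in [:: x1; x2; y1; y2]].
Proof.
move=> Hsym Hc c1 c2 d1 d2 H12 K12 e11 e12 e21 e22.
have nxy : forall x y, c x -> ~~ c y -> x != y.
  by move=> x y Hx Hy; apply/eqP => E; move: Hy; rewrite -E Hx.
have n11 := nxy _ _ c1 d1; have n12 := nxy _ _ c1 d2.
have n21 := nxy _ _ c2 d1; have n22 := nxy _ _ c2 d2.
have f11 : e y1 x1 by rewrite Hsym. have f12 : e y2 x1 by rewrite Hsym.
have f21 : e y1 x2 by rewrite Hsym. have f22 : e y2 x2 by rewrite Hsym.
split.
  have /card_uniqP E : uniq [:: x1; x2; y1; y2].
    by rewrite /= !inE !negb_or H12 n11 n12 n21 n22 K12.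
  by rewrite cardsE E.
have key : forall z p, (forall y, y \in [:: x1; x2; y1; y2] -> y != z -> y != p -> e z y) ->
    #|[set y in [set x in [:: x1; x2; y1; y2]] | compl_rel e z y]| <= 1.
  move=> z p Hz; apply: le1_intro => u v.
  have cl : forall w, w \in [set y in [set x in [:: x1; x2; y1; y2]] | compl_rel e z y] -> w = p.
    move=> w; rewrite !inE /compl_rel => /andP [Hw /andP [Hzw Hn]].
    by apply/eqP; apply: contraNT Hn => Hwp; apply: Hz; rewrite ?inE // eq_sym.
  by move=> /cl -> /cl ->.
move=> z; rewrite inE !inE => /or4P [] /eqP ->.
- apply: (key _ x2) => y; rewrite !inE => /or4P [] /eqP -> //; by rewrite eqxx.
- apply: (key _ x1) => y; rewrite !inE => /or4P [] /eqP -> //; by rewrite eqxx.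
- apply: (key _ y2) => y; rewrite !inE => /or4P [] /eqP -> //; by rewrite eqxx.
- apply: (key _ y1) => y; rewrite !inE => /or4P [] /eqP -> //; by rewrite eqxx.
Qed.
Lemma dense_C4 n (e : rel 'I_n) (c : 'I_n -> bool) S :
  (forall x y, e x y -> c x != c y) -> dense_set e 1 4 S ->
  exists x1 x2 y1 y2, [/\ c x1 && c x2, ~~ c y1 && ~~ c y2, x1 != x2, y1 != y2 &
     [&& e x1 y1, e x1 y2, e x2 y1 & e x2 y2]].
Proof.
move=> Hc [Hcard Hsp].
have nadj : forall x y, c x = c y -> ~~ e x y.
  by move=> x y E; apply/negP => /Hc; rewrite E eqxx.
pose SX (bt : bool) := [set x in S | c x == bt].
have Hsum : #|SX true| + #|SX false| = 4.
  rewrite -Hcard -(cardsID [set x | c x] S); congr (_ + _); apply: eq_card => x.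
    by rewrite !inE eqb_id.
  by rewrite !inE eqbF_neg andbC.
have sub : forall bt x, x \in SX bt -> SX bt :\ x \subset [set y in S | compl_rel e x y].
  move=> bt x Hx; apply/subsetP => y; move: Hx; rewrite !inE /compl_rel.
  move=> /andP [HxS /eqP Hcx] /andP [Hyx /andP [HyS /eqP Hcy]].
  by rewrite HyS eq_sym Hyx nadj // Hcx Hcy.
have le2 : forall bt, #|SX bt| <= 2.
  move=> bt; case: (set_0Vmem (SX bt)) => [->|[x Hx]]; first by rewrite cards0.
  rewrite (cardsD1 x) Hx add1n ltnS; apply: leq_trans (subset_leq_card (sub _ _ Hx)) _.
  by apply: Hsp; move: Hx; rewrite inE => /andP [].
have two : forall bt, #|SX bt| = 2.
  move=> bt; have := le2 true; have := le2 false; case: bt; lia.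
have other : forall x, x \in S -> exists x', [/\ x' \in S, c x' = c x & x' != x].
  move=> x HxS; have Hx : x \in SX (c x) by rewrite inE HxS eqxx.
  have := two (c x); rewrite (cardsD1 x) Hx add1n => [[]] /eqP.
  case/cards1P => x' E; have : x' \in SX (c x) :\ x by rewrite E set11.
  by rewrite !inE => /andP [Hx' /andP [HS /eqP Hc']]; exists x'.
have cross : forall x y, x \in S -> y \in S -> c x != c y -> e x y.
  move=> x y HxS HyS Hxy; apply/negPn/negP => Hn.
  have [x' [Hx'S Hcx' Hx'x]] := other x HxS.
  have : #|[set x'; y]| <= 1.
    apply: leq_trans (Hsp x HxS); apply/subset_leq_card/subsetP => z.
    rewrite !inE => /orP [] /eqP ->; rewrite /compl_rel.
      by rewrite Hx'S eq_sym Hx'x nadj.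
    rewrite HyS Hn andbT /=; apply: contra Hxy => /eqP ->; by [].
  rewrite cards2; case: eqP => // Ex'y; move: Hxy; by rewrite -Ex'y Hcx' eqxx.
have := two true; move/eqP/cards2P => [x1 [x2 [H12 E1]]].
have := two false; move/eqP/cards2P => [y1 [y2 [K12 E2]]].
have : x1 \in SX true by rewrite E1 !inE eqxx.
have : x2 \in SX true by rewrite E1 !inE eqxx orbT.
have : y1 \in SX false by rewrite E2 !inE eqxx.
have : y2 \in SX false by rewrite E2 !inE eqxx orbT.
rewrite !inE => /andP [HS4 /eqP C4] /andP [HS3 /eqP C3] /andP [HS2 /eqP C2] /andP [HS1 /eqP C1].
exists x1, x2, y1, y2; split => //; first by rewrite C1 C2.
  by rewrite C3 C4.
by rewrite !cross // ?C1 ?C2 ?C3 ?C4.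
Qed.
Lemma graph_upper n j :
  (forall a b (rows : 'I_b -> {set 'I_a}), a + b = n ->
     C4ab rows \/ exists A' B', sparseab rows A' B' /\ j <= #|A'| + #|B'|) ->
  ramsey_prop bipartite 1 4 j n.
Proof.
move=> Hm e [Hsym Hirr] [c Hc].
set A := [set x | c x]; set B := [set x | ~~ c x].
have Hn : #|A| + #|B| = n.
  have E := cardsC A; rewrite card_ord in E.
  apply: (eq_trans _ E); congr (_ + _); apply: eq_card => x.
  by rewrite !inE.
pose vA (i : 'I_#|A|) : 'I_n := enum_val i.
pose vB (i : 'I_#|B|) : 'I_n := enum_val i.
have cA : forall i, c (vA i) by move=> i; have := enum_valP i; rewrite inE.
have cB : forall i, ~~ c (vB i) by move=> i; have := enum_valP i; rewrite inE.
have iA : injective vA by apply: enum_val_inj.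
have iB : injective vB by apply: enum_val_inj.
have nadj : forall x y, c x = c y -> e x y = false.
  by move=> x y E; apply/negP => /Hc; rewrite E eqxx.
pose rows (k : 'I_#|B|) := [set i | e (vA i) (vB k)].
case: (Hm #|A| #|B| rows Hn) => [[i1 [i2 [k1 [k2 [Hi Hk /andP [H11 H21] H12 H22]]]]]|].
  left; exists [set x in [:: vA i1; vA i2; vB k1; vB k2]].
  move: H11 H21 H12 H22; rewrite !inE => H11 H21 H12 H22.
  by apply: C4_dense; rewrite ?(inj_eq iA) ?(inj_eq iB) //; exact: Hc.
move=> [A' [B' [[Hs1 Hs2] Hj]]]; right.
set S := vA @: A' :|: vB @: B'.
apply: (@shrink _ _ _ _ S).
  rewrite cardsU card_imset // card_imset //.
  have -> : vA @: A' :&: vB @: B' = set0.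
    apply/setP => z; rewrite !inE; apply/negbTE/negP.
    move=> /andP [/imsetP [i _ ->] /imsetP [k _ E]].
    by move: (cA i); rewrite E (negbTE (cB k)).
  by rewrite cards0 subn0.
move=> x /setUP [] /imsetP [i Hi ->].
  apply: leq_trans (Hs2 i Hi); rewrite -(card_imset _ iB).
  apply/subset_leq_card/subsetP => y; rewrite inE => /andP [/setUP [] /imsetP [z Hz ->] He].
    by rewrite nadj ?cA in He.
  by apply: imset_f; rewrite inE Hz inE He.
apply: leq_trans (Hs1 i Hi); rewrite -(card_imset _ iA).
apply/subset_leq_card/subsetP => y; rewrite inE => /andP [/setUP [] /imsetP [z Hz ->] He].
  by apply: imset_f; rewrite !inE Hz andbT Hsym.
by rewrite nadj // (negbTE (cB i)) (negbTE (cB z)) in He.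
Qed.

Definition Gr a b (rows : 'I_b -> {set 'I_a}) : rel 'I_(a + b) :=
  fun x y => match split x, split y with
             | inl i, inr k => i \in rows k
             | inr k, inl i => i \in rows k
             | _, _ => false end.
Definition colr a b (x : 'I_(a + b)) : bool := if split x is inl _ then true else false.

Lemma graph_lower a b j L : lowchk a b j L ->
  forall m, m <= a + b -> ~ ramsey_prop bipartite 1 4 j m.
Proof.
move=> Hl m Hm Hr.
have [HC4 Hsp] := mat_lower Hl.
pose rows := fun k : 'I_b => toset a (nth [::] L k).
pose f : 'I_m -> 'I_(a + b) := widen_ord Hm.
have finj : injective f by move=> x y /(congr1 val) /= /val_inj.
pose e' : rel 'I_m := fun x y => Gr rows (f x) (f y).
have sl : forall i : 'I_a, split (lshift b i) = inl i := fun i => unsplitK (inl i).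
have sr : forall k : 'I_b, split (rshift a k) = inr k := fun k => unsplitK (inr k).
have spl : forall x : 'I_(a + b), (exists i, x = lshift b i) \/ (exists k, x = rshift a k).
  move=> x; rewrite -(splitK x); case: (split x) => [i|k]; [left|right]; by eexists.
case: (Hr e').
- split.
    by move=> x y; rewrite /e' /Gr; case: (split (f x)) => ?; case: (split (f y)).
  by move=> x; rewrite /e' /Gr; case: (split (f x)).
- exists (fun x => colr (f x)) => x y; rewrite /e' /Gr /colr.
  by case: (split (f x)) => ?; case: (split (f y)).
- move=> [S HS]; have := dense_map finj (fun x y => erefl) HS.
  move=> /(dense_C4 (c := @colr a b)) [].
    move=> x y; rewrite /Gr /colr.
    by case: (split x) => ?; case: (split y).
  move=> x1 [x2 [y1 [y2 [/andP [c1 c2] /andP [d1 d2] Hx Hy /and4P [e11 e12 e21 e22]]]]].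
  apply: HC4.
  have gA : forall x : 'I_(a + b), colr x -> exists i, x = lshift b i.
    by move=> x; case: (spl x) => [] [z ->]; [exists z | rewrite /colr sr].
  have gB : forall y : 'I_(a + b), ~~ colr y -> exists k, y = rshift a k.
    by move=> y; case: (spl y) => [] [z ->]; [rewrite /colr sl | exists z].
  case: (gA _ c1) => i1 E1; case: (gA _ c2) => i2 E2.
  case: (gB _ d1) => k1 E3; case: (gB _ d2) => k2 E4; subst x1 x2 y1 y2.
  move: e11 e12 e21 e22; rewrite /Gr !sl !sr => e11 e12 e21 e22.
  exists i1, i2, k1, k2; split; rewrite ?e11 ?e12 ?e21 ?e22 //.
  by apply/negP => /eqP E; move: Hy; rewrite E eqxx.
- move=> [S HS]; have := sparse_map finj (fun x y => erefl) HS.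
  set T := f @: S => - [HT HTs].
  pose A' := [set i | lshift b i \in T]; pose B' := [set k | rshift a k \in T].
  have ET : T = @lshift a b @: A' :|: @rshift a b @: B'.
    apply/setP => x; case: (spl x) => [] [z ->]; rewrite !inE.
      rewrite mem_imset ?inE; last exact: lshift_inj.
      by case: (_ \in T) => //; apply/esym/imsetP => [[k _ /eqP]]; rewrite eq_lrshift.
    rewrite (mem_imset _ _ (@rshift_inj _ _)) inE.
    have -> : (rshift a z \in @lshift a b @: A') = false.
      by apply/negbTE/imsetP => [[k _ /eqP]]; rewrite eq_rlshift.
    by [].
  have Hlt : #|A'| + #|B'| < j.
    apply: Hsp; split.
      move=> k Hk; rewrite -(card_imset _ (@lshift_inj a b)).
      apply: leq_trans (HTs (rshift a k) _); last by rewrite inE in Hk.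
      apply/subset_leq_card/subsetP => y /imsetP [i]; rewrite !inE => /andP [H1 H2] ->.
      by rewrite /Gr sl sr /rows inE; apply/andP; split.
    move=> i Hi; rewrite -(card_imset _ (@rshift_inj a b)).
    apply: leq_trans (HTs (lshift b i) _); last by rewrite inE in Hi.
    apply/subset_leq_card/subsetP => y /imsetP [k]; rewrite !inE => /andP [H1 H2] ->.
    by rewrite /Gr sl sr /rows inE; apply/andP; split.
  suff E : #|A'| + #|B'| = j by rewrite E ltnn in Hlt.
  rewrite -HT ET cardsU !card_imset; try (exact: lshift_inj || exact: rshift_inj).
  have -> : @lshift a b @: A' :&: @rshift a b @: B' = set0.
    apply/setP => z; rewrite !inE; apply/negbTE/negP.
    by move=> /andP [/imsetP [i _ ->] /imsetP [k _ /eqP]]; rewrite eq_lrshift.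
  by rewrite cards0 subn0.
Qed.
Lemma mat_hyp n j :
  (forall a b, a + b = n -> a < j -> b < j -> srch a j b [::] (subs (iota 0 a))) ->
  forall a b (rows : 'I_b -> {set 'I_a}), a + b = n ->
     C4ab rows \/ exists A' B', sparseab rows A' B' /\ j <= #|A'| + #|B'|.
Proof.
move=> H a b rows Hab; case: (leqP j a) => Ha.
  right; exists setT, set0; split; last by rewrite cards0 addn0 cardsT card_ord.
  split => [k|i _]; first by rewrite inE.
  by apply: le1_intro => x y; rewrite !inE.
case: (leqP j b) => Hb.
  right; exists set0, setT; split; last by rewrite cards0 cardsT card_ord.
  split => [k _|i]; last by rewrite inE.
  by rewrite setI0 cards0.
exact: mat_upper (H a b Hab Ha Hb).
Qed.

Lemma low_all a b j L r : lowchk a b j L -> r = (a + b).+1 ->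
  forall m, m < r -> ~ ramsey_prop bipartite 1 4 j m.
Proof. move=> Hl -> m; rewrite ltnS => Hm. exact: (@graph_lower a b j L Hl m Hm). Qed.

Lemma s223 : srch 2 3 2 [::] (subs (iota 0 2)). Proof. by vm_compute. Qed.
Lemma s324 : srch 3 4 2 [::] (subs (iota 0 3)). Proof. by vm_compute. Qed.
Lemma s234 : srch 2 4 3 [::] (subs (iota 0 2)). Proof. by vm_compute. Qed.
Lemma s435 : srch 4 5 3 [::] (subs (iota 0 4)). Proof. by vm_compute. Qed.
Lemma s345 : srch 3 5 4 [::] (subs (iota 0 3)). Proof. by vm_compute. Qed.
Lemma s546 : srch 5 6 4 [::] (subs (iota 0 5)). Proof. by vm_compute. Qed.
Lemma s456 : srch 4 6 5 [::] (subs (iota 0 4)). Proof. by vm_compute. Qed.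
Lemma s667 : srch 6 7 6 [::] (subs (iota 0 6)). Proof. by vm_compute. Qed.

Lemma l3 : lowchk 1 2 3 [:: [:: 0]; [:: 0]]. Proof. by vm_compute. Qed.
Lemma l4 : lowchk 2 2 4 [:: [:: 1]; [:: 1]]. Proof. by vm_compute. Qed.
Lemma l5 : lowchk 3 3 5 [:: [:: 0; 2]; [:: 0]; [:: 1; 2]]. Proof. by vm_compute. Qed.
Lemma l6 : lowchk 4 4 6 [:: [:: 1; 2; 3]; [:: 3]; [:: 0; 1]; [:: 0; 3]].
Proof. by vm_compute. Qed.
Lemma l7 : lowchk 6 5 7 [:: [:: 3; 4; 5]; [:: 0; 3]; [:: 1; 2; 3]; [:: 0; 1; 5]; [:: 0; 2; 4]].
Proof. by vm_compute. Qed.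
Lemma l8 : lowchk 7 7 8 [:: [:: 0; 1; 3]; [:: 1; 2; 4]; [:: 2; 3; 5]; [:: 3; 4; 6];
  [:: 0; 4; 5]; [:: 1; 5; 6]; [:: 0; 2; 6]].
Proof. by vm_compute. Qed.
Lemma l9 : lowchk 8 8 9 [:: [:: 1; 2; 4]; [:: 2; 5; 7]; [:: 1; 3; 7]; [:: 4; 5; 6];
  [:: 0; 3; 5]; [:: 0; 4; 7]; [:: 2; 3; 6]; [:: 0; 1; 6]].
Proof. by vm_compute. Qed.
Lemma l13 : lowchk 12 12 13 [:: [:: 1; 4; 8; 9]; [:: 1; 2; 5; 7]; [:: 0; 7; 8; 10];
  [:: 2; 3; 9; 10]; [:: 3; 5; 8; 11]; [:: 7; 9; 11]; [:: 4; 5; 10]; [:: 1; 6; 10; 11];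
  [:: 2; 6; 8]; [:: 3; 4; 6; 7]; [:: 0; 1; 3]; [:: 0; 2; 4; 11]].
Proof. by vm_compute. Qed.
Lemma l14 : lowchk 13 13 14 [:: [:: 0; 1; 6; 10]; [:: 1; 5; 7; 12]; [:: 2; 3; 7; 10];
  [:: 0; 2; 9; 12]; [:: 3; 4; 6; 12]; [:: 8; 10; 11; 12]; [:: 0; 3; 5; 11];
  [:: 0; 4; 7; 8]; [:: 6; 7; 9; 11]; [:: 1; 2; 4; 11]; [:: 2; 5; 6; 8];
  [:: 1; 3; 8; 9]; [:: 4; 5; 9; 10]].
Proof. by vm_compute. Qed.

Lemma rn j r : ramsey_prop bipartite 1 4 j r ->
  (forall m, m < r -> ~ ramsey_prop bipartite 1 4 j m) -> ramsey_num_is bipartite 1 4 j r.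
Proof. by move=> H1 H2; split. Qed.

Ltac upper_tac := apply: graph_upper; apply: mat_hyp => a b Hab Ha Hb.

Theorem theorem5p3 :
  (forall j, j \in [:: 4; 5; 6] -> ramsey_num_is bipartite 1 4 j (2 * j - 3)) /\
  (forall j, j \in [:: 3; 7] -> ramsey_num_is bipartite 1 4 j (2 * j - 2)) /\
  (forall j, j \in [:: 8; 9; 13; 14] -> ramsey_num_is bipartite 1 4 j (2 * j - 1)).
Proof.
split; [|split].
- move=> j; rewrite !inE => /or3P [] /eqP -> /=; apply: rn.
  + upper_tac; have [[-> ->]|[-> ->]] : (a = 3 /\ b = 2) \/ (a = 2 /\ b = 3) by lia.
      exact: s324.
    exact: s234.
  + exact: low_all l4 _.
  + upper_tac; have [[-> ->]|[-> ->]] : (a = 4 /\ b = 3) \/ (a = 3 /\ b = 4) by lia.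
      exact: s435.
    exact: s345.
  + exact: low_all l5 _.
  + upper_tac; have [[-> ->]|[-> ->]] : (a = 5 /\ b = 4) \/ (a = 4 /\ b = 5) by lia.
      exact: s546.
    exact: s456.
  + exact: low_all l6 _.
- move=> j; rewrite !inE => /orP [] /eqP -> /=; apply: rn.
  + upper_tac; have [-> ->] : a = 2 /\ b = 2 by lia.
    exact: s223.
  + exact: low_all l3 _.
  + upper_tac; have [-> ->] : a = 6 /\ b = 6 by lia.
    exact: s667.
  + exact: low_all l7 _.
- move=> j; rewrite !inE => /or4P [] /eqP -> /=; apply: rn.
  + upper_tac; lia.
  + exact: low_all l8 _.
  + upper_tac; lia.
  + exact: low_all l9 _.
  + upper_tac; lia.
  + exact: low_all l13 _.
  + upper_tac; lia.
  + exact: low_all l14 _.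
Qed.
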